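(* Let $\beta_\bullet\in\{\beta,\beta_v\}$, let $\to_{\beta_\bullet}$ be the contextual closure of the rule $\beta_\bullet$ on $\Lambda_{\mathcal O}$, and let $\rightsquigarrow_U$ be the unbiased iteration of an associated surface reduction (as defined in the context). Then: 1. $\rightsquigarrow_U$ is RD-diamond: whenever $M_1\leftsquigarrow_U M\rightsquigarrow_U M_2$, either $M_1=M_2$ or there is $P$ with $M_1\rightsquigarrow_UP$ and $M_2\rightsquigarrow_UP$. 2. $\rightsquigarrow_U$ has the same normal forms as $\to_{\beta_\bullet}$. 3. If $N$ is $\beta_\bullet$-normal and $M\to_{\beta_\bullet}^*N$, then $M\rightsquigarrow_U^*N$.
   Context: Terms: $M::=x\mid\lambda x.M\mid MM\mid \mathsf{op}(M,\dots,M)$ where $\mathsf{op}$ ranges over a (possibly empty) set $\mathcal O$ of operator symbols with fixed arities, up to renaming of bound variables; this set is $\Lambda_{\mathcal O}$. Values: $V::=x\mid\lambda x.M$. Contexts: $C::=[\,]\mid MC\mid CM\mid\lambda x.C\mid\mathsf{op}(M,\dots,C,\dots,M)$. Rules: $(\lambda x.M)N\mapsto_\beta M\{N/x\}$; $(\lambda x.M)V\mapsto_{\beta_v}M\{V/x\}$ for $V$ a value. $\to_{\beta_\bullet}$ is the closure of the rule under all contexts. Head contexts $H::=[\,]\mid\lambda x.H\mid HM$; weak $W::=[\,]\mid WM\mid MW$; left $L::=[\,]\mid LM\mid VL$; right $R::=[\,]\mid MR\mid RV$. Surface reduction $\to_s$: for $\beta$, the closure of $\beta$ under head contexts; for $\beta_v$,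 the closure of $\beta_v$ under weak, or left, or right contexts (any one choice). $\rightsquigarrow_U\subseteq\to_{\beta_\bullet}$ is defined inductively: if $M\to_sM'$ then $M\rightsquigarrow_UM'$; if $M$ is $\to_s$-normal, $M\rightsquigarrow_UM'$ is given by: $\lambda x.P\rightsquigarrow_U\lambda x.P'$ if $P\rightsquigarrow_UP'$; $PQ\rightsquigarrow_UP'Q$ if $P\rightsquigarrow_UP'$; $PQ\rightsquigarrow_UPQ'$ if $Q\rightsquigarrow_UQ'$; $\mathsf{op}(\dots,P_i,\dots)\rightsquigarrow_U\mathsf{op}(\dots,P_i',\dots)$ if $P_i\rightsquigarrow_UP_i'$. *)

(* Defs.v *)
(* Lambda calculus with operators, de Bruijn indices
   (terms are thus identified up to renaming of bound variables). *)
From Stdlib Require Import List Arith Relations.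
Import ListNotations.

Section Lambda.

Variable Op : Type.
Variable arity : Op -> nat.

Inductive tm : Type :=
| Var : nat -> tm
| Lam : tm -> tm
| App : tm -> tm -> tm
| Opr : Op -> list tm -> tm.

(* Well-formed terms: operators applied to the right number of arguments.
   Lambda_O is the set of well-formed terms. *)
Inductive wf : tm -> Prop :=
| wf_var : forall n, wf (Var n)
| wf_lam : forall M, wf M -> wf (Lam M)
| wf_app : forall M N, wf M -> wf N -> wf (App M N)
| wf_opr : forall o l, length l = arity o -> Forall wf l -> wf (Opr o l).

Fixpoint lift (k : nat) (t : tm) : tm :=
  match t with
  | Var n => if n <? k then Var n else Var (S n)
  | Lam b => Lam (lift (S k) b)
  | App a b => App (lift k a) (lift k b)
  | Opr o l => Opr o (map (lift k) l)
  end.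

(* subst k u t : replace index k by u (u already lifted to depth k),
   decrementing indices > k. *)
Fixpoint subst (k : nat) (u : tm) (t : tm) : tm :=
  match t with
  | Var n => if n =? k then u else if n <? k then Var n else Var (pred n)
  | Lam b => Lam (subst (S k) (lift 0 u) b)
  | App a b => App (subst k u a) (subst k u b)
  | Opr o l => Opr o (map (subst k u) l)
  end.

Definition subst0 (N M : tm) : tm := subst 0 N M.

Definition is_value (t : tm) : Prop :=
  match t with Var _ | Lam _ => True | _ => False end.

(* The calculus: beta with head surface reduction, or beta_v with one of the
   three choices of surface contexts (weak, left, right). *)
Inductive calculus : Type := CbN | CbV_weak | CbV_left | CbV_right.

Inductive beta_rule : tm -> tm -> Prop :=
| beta_r : forall M N, beta_rule (App (Lam M) N) (subst0 N M).

Inductive betav_rule : tm -> tm -> Prop :=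
| betav_r : forall M V, is_value V -> betav_rule (App (Lam M) V) (subst0 V M).

Definition rule (c : calculus) : tm -> tm -> Prop :=
  match c with CbN => beta_rule | _ => betav_rule end.

Inductive full (r : tm -> tm -> Prop) : tm -> tm -> Prop :=
| full_rule : forall M M', r M M' -> full r M M'
| full_lam : forall M M', full r M M' -> full r (Lam M) (Lam M')
| full_appl : forall M M' N, full r M M' -> full r (App M N) (App M' N)
| full_appr : forall M N N', full r N N' -> full r (App M N) (App M N')
| full_opr : forall o l1 l2 M M',
    full r M M' -> full r (Opr o (l1 ++ M :: l2)) (Opr o (l1 ++ M' :: l2)).

Inductive head (r : tm -> tm -> Prop) : tm -> tm -> Prop :=
| head_rule : forall M M', r M M' -> head r M M'
| head_lam : forall M M', head r M M' -> head r (Lam M) (Lam M')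
| head_appl : forall M M' N, head r M M' -> head r (App M N) (App M' N).

Inductive weak (r : tm -> tm -> Prop) : tm -> tm -> Prop :=
| weak_rule : forall M M', r M M' -> weak r M M'
| weak_appl : forall M M' N, weak r M M' -> weak r (App M N) (App M' N)
| weak_appr : forall M N N', weak r N N' -> weak r (App M N) (App M N').

Inductive left (r : tm -> tm -> Prop) : tm -> tm -> Prop :=
| left_rule : forall M M', r M M' -> left r M M'
| left_appl : forall M M' N, left r M M' -> left r (App M N) (App M' N)
| left_appr : forall V N N', is_value V -> left r N N' -> left r (App V N) (App V N').

Inductive right (r : tm -> tm -> Prop) : tm -> tm -> Prop :=
| right_rule : forall M M', r M M' -> right r M M'
| right_appr : forall M N N', right r N N' -> right r (App M N) (App M N')
| right_appl : forall M M' V, is_value V -> right r M M' -> right r (App M V) (App M' V).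

Definition step (c : calculus) : tm -> tm -> Prop := full (rule c).

Definition surf (c : calculus) : tm -> tm -> Prop :=
  match c with
  | CbN => head beta_rule
  | CbV_weak => weak betav_rule
  | CbV_left => left betav_rule
  | CbV_right => right betav_rule
  end.

Definition normal (r : tm -> tm -> Prop) (M : tm) : Prop := forall N, ~ r M N.

Inductive unb (c : calculus) : tm -> tm -> Prop :=
| unb_surf : forall M M', surf c M M' -> unb c M M'
| unb_lam : forall P P', normal (surf c) (Lam P) -> unb c P P' ->
    unb c (Lam P) (Lam P')
| unb_appl : forall P P' Q, normal (surf c) (App P Q) -> unb c P P' ->
    unb c (App P Q) (App P' Q)
| unb_appr : forall P Q Q', normal (surf c) (App P Q) -> unb c Q Q' ->
    unb c (App P Q) (App P Q')
| unb_opr : forall o l1 l2 P P', normal (surf c) (Opr o (l1 ++ P :: l2)) ->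
    unb c P P' -> unb c (Opr o (l1 ++ P :: l2)) (Opr o (l1 ++ P' :: l2)).

End Lambda.

Arguments Var {Op}. Arguments Lam {Op}. Arguments App {Op}. Arguments Opr {Op}.
Arguments wf {Op}. Arguments lift {Op}. Arguments subst {Op}. Arguments subst0 {Op}.
Arguments is_value {Op}. Arguments beta_rule {Op}. Arguments betav_rule {Op}.
Arguments rule {Op}. Arguments full {Op}. Arguments head {Op}. Arguments weak {Op}.
Arguments left {Op}. Arguments right {Op}. Arguments step {Op}. Arguments surf {Op}.
Arguments normal {Op}. Arguments unb {Op}.

(* Main.v *)
Require Import Defs.
From Stdlib Require Import List Relations Arith Lia Classical.
Require Import Defs.
Import ListNotations.

Section Proofs.
Variable Op : Type.
Local Notation T := (tm Op).

Definition tm_ind2 (P : T -> Prop)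
  (Hv : forall n, P (Var n)) (Hl : forall t, P t -> P (Lam t))
  (Ha : forall t u, P t -> P u -> P (App t u))
  (Ho : forall o l, Forall P l -> P (Opr o l)) : forall t, P t :=
  fix F t := match t with
  | Var n => Hv n
  | Lam t => Hl t (F t)
  | App t u => Ha t u (F t) (F u)
  | Opr o l => Ho o l ((fix G l := match l return Forall P l with
        | nil => Forall_nil P | x :: r => Forall_cons x (F x) (G r) end) l)
  end.

Ltac cmp := repeat (cbn [lift subst]; match goal with
  | |- context [?a <? ?b] => destruct (Nat.ltb_spec a b)
  | |- context [?a =? ?b] => destruct (Nat.eqb_spec a b)
  end); cbn [lift subst]; try (exfalso; lia); try reflexivity.

Ltac opr_case := f_equal; rewrite !map_map; apply map_ext_in; intros;
  match goal with H : Forall _ _ |- _ => rewrite Forall_forall in H; apply H; auto end.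

Lemma lift_lift : forall (u : T) i j, j <= i -> lift (S i) (lift j u) = lift j (lift i u).
Proof.
  induction u using tm_ind2; intros; simpl.
  - cmp; f_equal; lia.
  - f_equal; apply IHu; lia.
  - f_equal; auto.
  - opr_case.
Qed.

Lemma subst_lift : forall (t : T) i X, subst i X (lift i t) = t.
Proof.
  induction t using tm_ind2; intros; simpl.
  - cmp; f_equal; lia.
  - f_equal; auto.
  - f_equal; auto.
  - f_equal. rewrite map_map. rewrite <- (map_id l) at 2. apply map_ext_in; intros.
    rewrite Forall_forall in H; apply H; auto.
Qed.

Lemma lift_subst_ge : forall (N : T) j i u, j <= i ->
  lift j (subst i u N) = subst (S i) (lift j u) (lift j N).
Proof.
  induction N using tm_ind2; intros; simpl.
  - cmp; f_equal; lia.
  - f_equal. rewrite IHN by lia. f_equal. apply lift_lift; lia.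
  - f_equal; auto.
  - opr_case.
Qed.

Lemma lift_subst_le : forall (N : T) i j u, i <= j ->
  lift j (subst i u N) = subst i (lift j u) (lift (S j) N).
Proof.
  induction N using tm_ind2; intros; simpl.
  - cmp; f_equal; lia.
  - f_equal. rewrite IHN by lia. f_equal. apply lift_lift; lia.
  - f_equal; auto.
  - opr_case.
Qed.

Lemma subst_subst : forall (B : T) i j N u, i <= j ->
  subst j u (subst i N B) = subst i (subst j u N) (subst (S j) (lift i u) B).
Proof.
  induction B using tm_ind2; intros; simpl.
  - cmp; try (f_equal; lia). rewrite subst_lift. reflexivity.
  - f_equal. rewrite IHB by lia. f_equal.
    + symmetry. apply lift_subst_ge; lia.
    + f_equal. apply lift_lift; lia.
  - f_equal; auto.
  - opr_case.
Qed.

Lemma lift_subst0 : forall (B N : T) k, lift k (subst0 N B) = subst0 (lift k N) (lift (S k) B).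
Proof. intros. unfold subst0. apply lift_subst_le. lia. Qed.

Lemma subst_subst0 : forall (B N u : T) k,
  subst k u (subst0 N B) = subst0 (subst k u N) (subst (S k) (lift 0 u) B).
Proof. intros. unfold subst0. apply subst_subst. lia. Qed.

Lemma value_lift : forall (V : T) k, is_value V -> is_value (lift k V).
Proof. destruct V; simpl; intros; try tauto. destruct (n <? k); simpl; auto. Qed.

Lemma value_subst : forall (V u : T) k, is_value V -> is_value u -> is_value (subst k u V).
Proof. destruct V; simpl; intros; try tauto. destruct (n =? k); auto.
  destruct (n <? k); simpl; auto. Qed.

Lemma nonvalue_lift : forall (V : T) k, ~ is_value V -> ~ is_value (lift k V).
Proof. destruct V; simpl; intros; tauto. Qed.

Lemma nonvalue_subst : forall (V u : T) k, ~ is_value V -> ~ is_value (subst k u V).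
Proof. destruct V; simpl; intros; tauto. Qed.


Inductive par (c : calculus) : T -> T -> Prop :=
| par_var : forall n, par c (Var n) (Var n)
| par_lam : forall A A', par c A A' -> par c (Lam A) (Lam A')
| par_app : forall A A' C C', par c A A' -> par c C C' -> par c (App A C) (App A' C')
| par_opr : forall o l l', parl c l l' -> par c (Opr o l) (Opr o l')
| par_beta : forall B B' N N', par c B B' -> par c N N' -> (c = CbN \/ is_value N) ->
    par c (App (Lam B) N) (subst0 N' B')
with parl (c : calculus) : list T -> list T -> Prop :=
| parl_nil : parl c nil nil
| parl_cons : forall a a' l l', par c a a' -> parl c l l' -> parl c (a :: l) (a' :: l').

Scheme par_mind := Induction for par Sort Prop
  with parl_mind := Induction for parl Sort Prop.

Lemma parl_refl_of : forall c (l : list T), Forall (fun t => par c t t) l -> parl c l l.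
Proof. induction 1; constructor; auto. Qed.

Lemma par_refl : forall c (t : T), par c t t.
Proof.
  intro c; induction t using tm_ind2; constructor; auto. apply parl_refl_of; auto.
Qed.

Lemma parl_refl : forall c (l : list T), parl c l l.
Proof. intros; apply parl_refl_of; rewrite Forall_forall; intros; apply par_refl. Qed.

Lemma parl_app : forall c (l1 l2 l1' l2' : list T), parl c l1 l1' -> parl c l2 l2' ->
  parl c (l1 ++ l2) (l1' ++ l2').
Proof. induction 1; simpl; intros; auto; constructor; auto. Qed.

Lemma par_lift : forall c (M M' : T), par c M M' -> forall k, par c (lift k M) (lift k M').
Proof.
  intro c.
  apply (par_mind c (fun M M' _ => forall k, par c (lift k M) (lift k M'))
                    (fun l l' _ => forall k, parl c (map (lift k) l) (map (lift k) l')));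
  intros; simpl; try solve [constructor; auto].
  - apply par_refl.
  - rewrite lift_subst0. apply par_beta; auto.
    destruct o; auto. right; apply value_lift; auto.
Qed.

Lemma parl_lift : forall c (l l' : list T), parl c l l' -> forall k,
  parl c (map (lift k) l) (map (lift k) l').
Proof. induction 1; simpl; constructor; auto using par_lift. Qed.

Lemma par_subst : forall c (M M' : T), par c M M' -> forall k u u', par c u u' ->
  (c = CbN \/ is_value u) -> par c (subst k u M) (subst k u' M').
Proof.
  intro c.
  apply (par_mind c (fun M M' _ => forall k u u', par c u u' ->
            (c = CbN \/ is_value u) -> par c (subst k u M) (subst k u' M'))
                    (fun l l' _ => forall k u u', par c u u' ->
            (c = CbN \/ is_value u) -> parl c (map (subst k u) l) (map (subst k u') l')));
  intros; simpl; try solve [constructor; auto].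
  - destruct (n =? k); auto. destruct (n <? k); constructor.
  - constructor. apply H; auto using par_lift. destruct H1; auto. right; apply value_lift; auto.
  - rewrite subst_subst0. apply par_beta; auto.
    + apply H; auto using par_lift. destruct H2; auto. right; apply value_lift; auto.
    + destruct o; auto. destruct H2; auto. right; apply value_subst; auto.
Qed.

Lemma parl_subst : forall c (l l' : list T), parl c l l' -> forall k u u', par c u u' ->
  (c = CbN \/ is_value u) -> parl c (map (subst k u) l) (map (subst k u') l').
Proof. induction 1; simpl; constructor; auto using par_subst. Qed.

Lemma par_value : forall c (V V' : T), par c V V' -> is_value V -> is_value V'.
Proof. intros c V V' H; destruct H; simpl; tauto. Qed.

Notation fr c := (full (rule c)).
Notation rt R := (clos_refl_trans _ R).

Lemma rt_map : forall (R S : T -> T -> Prop) (f : T -> T),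
  (forall x y, R x y -> S (f x) (f y)) -> forall x y, rt R x y -> rt S (f x) (f y).
Proof.
  intros R S f Hf x y H; induction H.
  - apply rt_step; auto.
  - apply rt_refl.
  - eapply rt_trans; eauto.
Qed.

Lemma rt_opr_gen : forall (R : T -> T -> Prop) o,
  (forall k1 k2 M M', R M M' -> R (Opr o (k1 ++ M :: k2)) (Opr o (k1 ++ M' :: k2))) ->
  forall l l', Forall2 (rt R) l l' -> forall pre, rt R (Opr o (pre ++ l)) (Opr o (pre ++ l')).
Proof.
  intros R o HR l l' H. induction H; intros pre.
  - apply rt_refl.
  - eapply rt_trans.
    + apply (rt_map R R (fun t => Opr o (pre ++ t :: l))); [intros; apply HR; auto | eauto].
    + specialize (IHForall2 (pre ++ [y])). rewrite <- !app_assoc in IHForall2. exact IHForall2.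
Qed.

Lemma rt_opr : forall (R : T -> T -> Prop) o,
  (forall k1 k2 M M', R M M' -> R (Opr o (k1 ++ M :: k2)) (Opr o (k1 ++ M' :: k2))) ->
  forall l l', Forall2 (rt R) l l' -> rt R (Opr o l) (Opr o l').
Proof. intros. apply (rt_opr_gen R o H l l' H0 nil). Qed.

Lemma rule_par : forall c (M M' : T), rule c M M' -> par c M M'.
Proof.
  intros c M M' H; destruct c; simpl in H; destruct H; apply par_beta; auto using par_refl.
Qed.

Lemma full_par : forall c (M M' : T), fr c M M' -> par c M M'.
Proof.
  induction 1; try constructor; auto using rule_par, par_refl.
  apply parl_app; [apply parl_refl | constructor; auto using parl_refl].
Qed.

Lemma par_full : forall c (M M' : T), par c M M' -> rt (fr c) M M'.
Proof.
  intro c.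
  apply (par_mind c (fun M M' _ => rt (fr c) M M')
                    (fun l l' _ => Forall2 (rt (fr c)) l l'));
  intros; simpl.
  - apply rt_refl.
  - apply (rt_map (fr c) (fr c) Lam); auto. intros; apply full_lam; auto.
  - eapply rt_trans.
    + apply (rt_map (fr c) (fr c) (fun t => App t C)); eauto. intros; apply full_appl; auto.
    + apply (rt_map (fr c) (fr c) (fun t => App A' t)); eauto. intros; apply full_appr; auto.
  - apply rt_opr; auto. intros; apply full_opr; auto.
  - eapply rt_trans; [eapply rt_trans|].
    + apply (rt_map (fr c) (fr c) (fun t => App (Lam t) N)); eauto. intros; apply full_appl, full_lam; auto.
    + apply (rt_map (fr c) (fr c) (fun t => App (Lam B') t)); eauto. intros; apply full_appr; auto.
    + apply rt_step. apply full_rule. destruct c; simpl; try constructor.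
      all: destruct o; try discriminate; eauto using par_value.
  - constructor.
  - constructor; auto.
Qed.

Lemma rule_surf : forall c (M M' : T), rule c M M' -> surf c M M'.
Proof. destruct c; simpl; intros; constructor; auto. Qed.

Lemma surf_full : forall c (M M' : T), surf c M M' -> fr c M M'.
Proof.
  destruct c; simpl; induction 1;
  solve [apply full_rule; auto | apply full_lam; auto | apply full_appl; auto | apply full_appr; auto].
Qed.

Lemma rule_app : forall c (M M' : T), rule c M M' -> exists A C, M = App A C.
Proof. destruct c; simpl; destruct 1; eauto. Qed.

Lemma surf_opr : forall c o l (X : T), surf c (Opr o l) X -> False.
Proof.
  destruct c; simpl; intros; inversion H; subst;
  match goal with H : rule _ _ _ |- _ => idtac | H : beta_rule _ _ |- _ => inversion H | H : betav_rule _ _ |- _ => inversion H end.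
Qed.

Lemma surf_var : forall c n (X : T), surf c (Var n) X -> False.
Proof.
  destruct c; simpl; intros; inversion H; subst;
  match goal with H : beta_rule _ _ |- _ => inversion H | H : betav_rule _ _ |- _ => inversion H end.
Qed.

Lemma surf_value : forall c (V X : T), c <> CbN -> is_value V -> surf c V X -> False.
Proof.
  destruct c; simpl; intros; try congruence; destruct V; simpl in *; try tauto;
  inversion H1; subst;
  match goal with H : betav_rule _ _ |- _ => inversion H end.
Qed.

Lemma rule_subst : forall c (M M' u : T) k, rule c M M' -> (c = CbN \/ is_value u) ->
  rule c (subst k u M) (subst k u M').
Proof.
  destruct c; simpl; intros M M' u k H Hu; destruct H; simpl; rewrite subst_subst0;
  constructor; try (destruct Hu; [discriminate|]; apply value_subst; auto).
Qed.

Lemma rule_lift : forall c (M M' : T) k, rule c M M' -> rule c (lift k M) (lift k M').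
Proof.
  destruct c; simpl; intros M M' k H; destruct H; simpl; rewrite lift_subst0;
  constructor; try (apply value_lift; auto).
Qed.

Lemma surf_subst : forall c (M M' : T), surf c M M' -> forall u k, (c = CbN \/ is_value u) ->
  surf c (subst k u M) (subst k u M').
Proof.
  destruct c; simpl; induction 1; intros u k Hu; simpl.
  all: try solve [constructor; apply (rule_subst CbN); auto].
  all: try solve [constructor; apply (rule_subst CbV_weak); auto].
  all: try solve [constructor; apply (rule_subst CbV_left); auto].
  all: try solve [constructor; apply (rule_subst CbV_right); auto].
  all: try solve [constructor; auto].
  all: try solve [constructor; auto; destruct Hu; [discriminate|]; apply value_subst; auto].
Qed.

Lemma surf_lift : forall c (M M' : T), surf c M M' -> forall k,
  surf c (lift k M) (lift k M').
Proof.
  destruct c; simpl; induction 1; intros k; simpl.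
  all: try solve [constructor; apply (rule_lift CbN); auto].
  all: try solve [constructor; apply (rule_lift CbV_weak); auto].
  all: try solve [constructor; apply (rule_lift CbV_left); auto].
  all: try solve [constructor; apply (rule_lift CbV_right); auto].
  all: try solve [constructor; auto].
  all: try solve [constructor; auto; apply value_lift; auto].
Qed.

Inductive ipar (c : calculus) : T -> T -> Prop :=
| ip_var : forall n, ipar c (Var n) (Var n)
| ip_lamN : forall A A', c = CbN -> ipar c A A' -> ipar c (Lam A) (Lam A')
| ip_lamV : forall A A', c <> CbN -> par c A A' -> ipar c (Lam A) (Lam A')
| ip_appN : forall A A' C C', c = CbN -> ipar c A A' -> par c C C' ->
    ipar c (App A C) (App A' C')
| ip_appV : forall A A' C C', c <> CbN -> ipar c A A' -> ipar c C C' ->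
    ipar c (App A C) (App A' C')
| ip_appL : forall A A' C C', c = CbV_left -> ~ is_value A -> ipar c A A' -> par c C C' ->
    ipar c (App A C) (App A' C')
| ip_appR : forall A A' C C', c = CbV_right -> ~ is_value C -> ipar c C C' -> par c A A' ->
    ipar c (App A C) (App A' C')
| ip_opr : forall o l l', parl c l l' -> ipar c (Opr o l) (Opr o l').

Lemma ipar_par : forall c (M M' : T), ipar c M M' -> par c M M'.
Proof. induction 1; constructor; auto. Qed.

Definition kind (t : T) : nat :=
  match t with Var _ => 0 | Lam _ => 1 | App _ _ => 2 | Opr _ _ => 3 end.

Lemma ipar_kind : forall c (M M' : T), ipar c M M' -> kind M = kind M'.
Proof. destruct 1; reflexivity. Qed.

Lemma kind_value : forall (M M' : T), kind M = kind M' -> is_value M -> is_value M'.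
Proof. destruct M, M'; simpl; intros; try discriminate; auto. Qed.

Lemma ipar_lift : forall c (M M' : T), ipar c M M' -> forall k, ipar c (lift k M) (lift k M').
Proof.
  induction 1; intros k; simpl.
  - destruct (n <? k); constructor.
  - apply ip_lamN; auto.
  - apply ip_lamV; auto using par_lift.
  - apply ip_appN; auto using par_lift.
  - apply ip_appV; auto.
  - apply ip_appL; auto using par_lift, nonvalue_lift.
  - apply ip_appR; auto using par_lift, nonvalue_lift.
  - apply ip_opr; auto using parl_lift.
Qed.

Lemma par_value_ipar : forall c (V V' : T), c <> CbN -> par c V V' -> is_value V -> ipar c V V'.
Proof.
  intros c V V' Hc H Hv; destruct H; simpl in Hv; try tauto; [apply ip_var | apply ip_lamV; auto].
Qed.

Lemma ipar_subst_V : forall c (B0 B' : T), ipar c B0 B' -> c <> CbN ->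
  forall k V V', par c V V' -> is_value V -> ipar c (subst k V B0) (subst k V' B').
Proof.
  induction 1; intros Hc k V V' HV Hv; simpl; try congruence.
  - destruct (n =? k). apply par_value_ipar; auto. destruct (n <? k); constructor.
  - apply ip_lamV; auto. apply par_subst; auto using par_lift. right; apply value_lift; auto.
  - apply ip_appV; auto.
  - apply ip_appL; auto using par_subst, nonvalue_subst.
  - apply ip_appR; auto using par_subst, nonvalue_subst.
  - apply ip_opr; auto using parl_subst.
Qed.

Lemma rt_head_lam : forall (A A0 : T), rt (head beta_rule) A A0 ->
  rt (head beta_rule) (Lam A) (Lam A0).
Proof. intros; apply (rt_map (head beta_rule) (head beta_rule) Lam); auto. intros; apply head_lam; auto. Qed.

Lemma rt_head_appl : forall (A A0 C : T), rt (head beta_rule) A A0 ->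
  rt (head beta_rule) (App A C) (App A0 C).
Proof. intros; apply (rt_map (head beta_rule) (head beta_rule) (fun t => App t C)); auto. intros; apply head_appl; auto. Qed.

Lemma ipar_subst_N : forall (B0 B' : T), ipar CbN B0 B' ->
  forall k u u' u0, par CbN u u' -> rt (head beta_rule) u u0 -> ipar CbN u0 u' ->
  exists X, rt (head beta_rule) (subst k u B0) X /\ ipar CbN X (subst k u' B').
Proof.
  intros B0 B' H. remember CbN as c eqn:Ec. induction H; intros k u u' u0 Hp Hr Hi; simpl; try congruence.
  - destruct (n =? k). eauto. exists (if n <? k then Var n else Var (pred n)).
    split. apply rt_refl. destruct (n <? k); constructor.
  - destruct (IHipar (S k) (lift 0 u) (lift 0 u') (lift 0 u0)) as [X [HX1 HX2]];
      auto using par_lift, ipar_lift.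
    + apply (rt_map (head beta_rule) (head beta_rule) (lift 0)); auto. intros; apply (surf_lift CbN); auto.
    + exists (Lam X); split; auto using rt_head_lam. apply ip_lamN; auto.
  - destruct (IHipar k u u' u0) as [X [HX1 HX2]]; auto.
    exists (App X (subst k u C)); split; auto using rt_head_appl.
    apply ip_appN; auto. subst c; apply par_subst; auto.
  - exists (Opr o (map (subst k u) l)); split. apply rt_refl. apply ip_opr.
    subst c; apply parl_subst; auto.
Qed.

Lemma value_dec : forall (t : T), is_value t \/ ~ is_value t.
Proof. destruct t; simpl; tauto. Qed.

Lemma par_fact : forall c (M N : T), par c M N ->
  exists M0, rt (surf c) M M0 /\ ipar c M0 N.
Proof.
  intros c M N H; induction H.
  - exists (Var n); split; [apply rt_refl | constructor].
  - destruct IHpar as [A0 [H1 H2]]. destruct c.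
    1: exists (Lam A0); split; [apply rt_head_lam; auto | apply ip_lamN; auto].
    all: exists (Lam A); split; [apply rt_refl | apply ip_lamV; auto; discriminate].
  - destruct IHpar1 as [A0 [H1 H2]], IHpar2 as [C0 [H3 H4]]. destruct c; simpl in *.
    + exists (App A0 C); split; [apply rt_head_appl; auto | apply ip_appN; auto].
    + exists (App A0 C0); split; [apply rt_trans with (App A0 C) | apply ip_appV; auto; discriminate].
      * apply (rt_map (weak betav_rule) (weak betav_rule) (fun t => App t C)); auto.
        intros; apply weak_appl; auto.
      * apply (rt_map (weak betav_rule) (weak betav_rule) (fun t => App A0 t)); auto.
        intros; apply weak_appr; auto.
    + destruct (value_dec A0) as [Hv|Hv].
      * exists (App A0 C0); split; [apply rt_trans with (App A0 C) | apply ip_appV; auto; discriminate].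
        -- apply (rt_map (left betav_rule) (left betav_rule) (fun t => App t C)); auto.
           intros; apply left_appl; auto.
        -- apply (rt_map (left betav_rule) (left betav_rule) (fun t => App A0 t)); auto.
           intros; apply left_appr; auto.
      * exists (App A0 C); split; [| apply ip_appL; auto].
        apply (rt_map (left betav_rule) (left betav_rule) (fun t => App t C)); auto.
        intros; apply left_appl; auto.
    + destruct (value_dec C0) as [Hv|Hv].
      * exists (App A0 C0); split; [apply rt_trans with (App A C0) | apply ip_appV; auto; discriminate].
        -- apply (rt_map (right betav_rule) (right betav_rule) (fun t => App A t)); auto.
           intros; apply right_appr; auto.
        -- apply (rt_map (right betav_rule) (right betav_rule) (fun t => App t C0)); auto.
           intros; apply right_appl; auto.
      * exists (App A C0); split; [| apply ip_appR; auto].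
        apply (rt_map (right betav_rule) (right betav_rule) (fun t => App A t)); auto.
        intros; apply right_appr; auto.
  - exists (Opr o l); split; [apply rt_refl | apply ip_opr; auto].
  - destruct IHpar1 as [B0 [HB1 HB2]], IHpar2 as [N0 [HN1 HN2]].
    assert (Hs : surf c (App (Lam B) N) (subst0 N B)).
    { apply rule_surf. destruct c; simpl; constructor. all: destruct H1; try discriminate; auto. }
    assert (Hr : rt (surf c) (subst0 N B) (subst0 N B0)).
    { apply (rt_map (surf c) (surf c) (fun t => subst0 N t)); auto.
      intros; unfold subst0; apply surf_subst; auto. }
    destruct c.
    1: destruct (ipar_subst_N B0 B' HB2 0 N N' N0) as [X [HX1 HX2]]; auto;
       exists X; split; [eapply rt_trans; [apply rt_step; exact Hs | eapply rt_trans; eauto] | exact HX2].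
    all: exists (subst0 N B0); split; [eapply rt_trans; [apply rt_step; exact Hs | exact Hr] |].
    all: apply ipar_subst_V; auto; try discriminate; destruct H1; try discriminate; auto.
Qed.

Definition Dapp c (A C A' C' : T) :=
  (c = CbN /\ ipar c A A' /\ par c C C') \/ (c <> CbN /\ ipar c A A' /\ ipar c C C') \/
  (c = CbV_left /\ ~ is_value A /\ ipar c A A' /\ par c C C') \/
  (c = CbV_right /\ ~ is_value C /\ ipar c C C' /\ par c A A').

Lemma inv_app_s : forall c (A C N : T), ipar c (App A C) N ->
  exists A' C', N = App A' C' /\ Dapp c A C A' C'.
Proof. intros; inversion H; subst; do 2 eexists; split; try reflexivity; unfold Dapp; tauto. Qed.

Lemma inv_app_t : forall c (M A' C' : T), ipar c M (App A' C') ->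
  exists A C, M = App A C /\ Dapp c A C A' C'.
Proof. intros; inversion H; subst; do 2 eexists; split; try reflexivity; unfold Dapp; tauto. Qed.

Lemma inv_lam_s : forall c (A N : T), ipar c (Lam A) N ->
  exists A', N = Lam A' /\ par c A A' /\ (c = CbN -> ipar c A A').
Proof.
  intros; inversion H; subst; eexists; split; try reflexivity; split; auto using ipar_par;
  intros; congruence.
Qed.

Lemma inv_lam_t : forall c (M A' : T), ipar c M (Lam A') ->
  exists A, M = Lam A /\ par c A A' /\ (c = CbN -> ipar c A A').
Proof.
  intros; inversion H; subst; eexists; split; try reflexivity; split; auto using ipar_par;
  intros; congruence.
Qed.

Lemma ipar_value_f : forall c (M N : T), ipar c M N -> is_value M -> is_value N.
Proof. intros; apply (kind_value M N); [eapply ipar_kind; eauto | auto]. Qed.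

Lemma ipar_value_b : forall c (M N : T), ipar c M N -> is_value N -> is_value M.
Proof. intros; apply (kind_value N M); [symmetry; eapply ipar_kind; eauto | auto]. Qed.

Ltac ctx := first [apply head_lam | apply head_appl | apply weak_appl | apply weak_appr
  | apply left_appl | apply left_appr | apply right_appr | apply right_appl]; auto.

Lemma ipar_swap : forall c (M N P : T), ipar c M N -> surf c N P ->
  exists Q, surf c M Q /\ par c Q P.
Proof.
  intros c M N P Hi Hs. revert M Hi.
  destruct c; simpl in *; induction Hs; intros M0 Hi.
  - destruct H. destruct (inv_app_t _ _ _ _ Hi) as [A [C [-> D]]].
    unfold Dapp in D; destruct D as [[_ [HA HC]]|[[Hc _]|[[Hc _]|[Hc _]]]]; try congruence.
    destruct (inv_lam_t _ _ _ HA) as [B0 [-> [HB _]]].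
    exists (subst0 C B0); split. do 2 constructor. apply par_subst; auto.
  - destruct (inv_lam_t _ _ _ Hi) as [A [-> [_ HA]]].
    destruct (IHHs A (HA eq_refl)) as [Q [HQ1 HQ2]].
    exists (Lam Q); split; [ctx | constructor; auto].
  - destruct (inv_app_t _ _ _ _ Hi) as [A [C [-> D]]].
    unfold Dapp in D; destruct D as [[_ [HA HC]]|[[Hc _]|[[Hc _]|[Hc _]]]]; try congruence.
    destruct (IHHs A HA) as [Q [HQ1 HQ2]].
    exists (App Q C); split; [ctx | constructor; auto].
  - destruct H. destruct (inv_app_t _ _ _ _ Hi) as [A [C [-> D]]].
    unfold Dapp in D; destruct D as [[Hc _]|[[_ [HA HC]]|[[Hc _]|[Hc _]]]]; try congruence.
    destruct (inv_lam_t _ _ _ HA) as [B0 [-> [HB _]]].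
    exists (subst0 C B0); split. do 2 constructor. eapply ipar_value_b; eauto.
    apply par_subst; auto using ipar_par. right; eapply ipar_value_b; eauto.
  - destruct (inv_app_t _ _ _ _ Hi) as [A [C [-> D]]].
    unfold Dapp in D; destruct D as [[Hc _]|[[_ [HA HC]]|[[Hc _]|[Hc _]]]]; try congruence.
    destruct (IHHs A HA) as [Q [HQ1 HQ2]].
    exists (App Q C); split; [ctx | constructor; auto using ipar_par].
  - destruct (inv_app_t _ _ _ _ Hi) as [A [C [-> D]]].
    unfold Dapp in D; destruct D as [[Hc _]|[[_ [HA HC]]|[[Hc _]|[Hc _]]]]; try congruence.
    destruct (IHHs C HC) as [Q [HQ1 HQ2]].
    exists (App A Q); split; [ctx | constructor; auto using ipar_par].
  - destruct H. destruct (inv_app_t _ _ _ _ Hi) as [A [C [-> D]]].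
    unfold Dapp in D; destruct D as [[Hc _]|[[_ [HA HC]]|[[_ [Hnv [HA HC]]]|[Hc _]]]]; try congruence.
    + destruct (inv_lam_t _ _ _ HA) as [B0 [-> [HB _]]].
      exists (subst0 C B0); split. do 2 constructor. eapply ipar_value_b; eauto.
      apply par_subst; auto using ipar_par. right; eapply ipar_value_b; eauto.
    + destruct (inv_lam_t _ _ _ HA) as [B0 [-> _]]. simpl in Hnv; tauto.
  - destruct (inv_app_t _ _ _ _ Hi) as [A [C [-> D]]].
    unfold Dapp in D; destruct D as [[Hc _]|[[_ [HA HC]]|[[_ [Hnv [HA HC]]]|[Hc _]]]]; try congruence.
    + destruct (IHHs A HA) as [Q [HQ1 HQ2]].
      exists (App Q C); split; [ctx | constructor; auto using ipar_par].
    + destruct (IHHs A HA) as [Q [HQ1 HQ2]].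
      exists (App Q C); split; [ctx | constructor; auto using ipar_par].
  - destruct (inv_app_t _ _ _ _ Hi) as [A [C [-> D]]].
    unfold Dapp in D; destruct D as [[Hc _]|[[_ [HA HC]]|[[_ [Hnv [HA HC]]]|[Hc _]]]]; try congruence.
    + destruct (IHHs C HC) as [Q [HQ1 HQ2]].
      exists (App A Q); split; [ctx; eapply ipar_value_b; eauto | constructor; auto using ipar_par].
    + exfalso; apply Hnv; eapply ipar_value_b; eauto.
  - destruct H. destruct (inv_app_t _ _ _ _ Hi) as [A [C [-> D]]].
    unfold Dapp in D; destruct D as [[Hc _]|[[_ [HA HC]]|[[Hc _]|[_ [Hnv [HC HA]]]]]]; try congruence.
    + destruct (inv_lam_t _ _ _ HA) as [B0 [-> [HB _]]].
      exists (subst0 C B0); split. do 2 constructor. eapply ipar_value_b; eauto.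
      apply par_subst; auto using ipar_par. right; eapply ipar_value_b; eauto.
    + exfalso; apply Hnv; eapply ipar_value_b; eauto.
  - destruct (inv_app_t _ _ _ _ Hi) as [A [C [-> D]]].
    unfold Dapp in D; destruct D as [[Hc _]|[[_ [HA HC]]|[[Hc _]|[_ [Hnv [HC HA]]]]]]; try congruence.
    + destruct (IHHs C HC) as [Q [HQ1 HQ2]].
      exists (App A Q); split; [ctx | constructor; auto using ipar_par].
    + destruct (IHHs C HC) as [Q [HQ1 HQ2]].
      exists (App A Q); split; [ctx | constructor; auto using ipar_par].
  - destruct (inv_app_t _ _ _ _ Hi) as [A [C [-> D]]].
    unfold Dapp in D; destruct D as [[Hc _]|[[_ [HA HC]]|[[Hc _]|[_ [Hnv [HC HA]]]]]]; try congruence.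
    + destruct (IHHs A HA) as [Q [HQ1 HQ2]].
      exists (App Q C); split; [ctx; eapply ipar_value_b; eauto | constructor; auto using ipar_par].
    + exfalso; apply Hnv; eapply ipar_value_b; eauto.
Qed.

Lemma persist : forall c (M N X : T), ipar c M N -> surf c M X -> exists Y, surf c N Y.
Proof.
  intros c M N X Hi Hs. revert N Hi.
  destruct c; simpl in *; induction Hs; intros N0 Hi.
  - destruct H. destruct (inv_app_s _ _ _ _ Hi) as [A' [C' [-> D]]].
    unfold Dapp in D; destruct D as [[_ [HA HC]]|[[Hc _]|[[Hc _]|[Hc _]]]]; try congruence.
    destruct (inv_lam_s _ _ _ HA) as [B' [-> _]]. eexists; do 2 constructor.
  - destruct (inv_lam_s _ _ _ Hi) as [A' [-> [_ HA]]].
    destruct (IHHs A' (HA eq_refl)) as [Q HQ]. eexists; ctx; eauto.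
  - destruct (inv_app_s _ _ _ _ Hi) as [A' [C' [-> D]]].
    unfold Dapp in D; destruct D as [[_ [HA HC]]|[[Hc _]|[[Hc _]|[Hc _]]]]; try congruence.
    destruct (IHHs A' HA) as [Q HQ]. eexists; ctx; eauto.
  - destruct H. destruct (inv_app_s _ _ _ _ Hi) as [A' [C' [-> D]]].
    unfold Dapp in D; destruct D as [[Hc _]|[[_ [HA HC]]|[[Hc _]|[Hc _]]]]; try congruence.
    destruct (inv_lam_s _ _ _ HA) as [B' [-> _]]. eexists; do 2 constructor.
    eapply ipar_value_f; eauto.
  - destruct (inv_app_s _ _ _ _ Hi) as [A' [C' [-> D]]].
    unfold Dapp in D; destruct D as [[Hc _]|[[_ [HA HC]]|[[Hc _]|[Hc _]]]]; try congruence.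
    destruct (IHHs A' HA) as [Q HQ]. exists (App Q C'); ctx.
  - destruct (inv_app_s _ _ _ _ Hi) as [A' [C' [-> D]]].
    unfold Dapp in D; destruct D as [[Hc _]|[[_ [HA HC]]|[[Hc _]|[Hc _]]]]; try congruence.
    destruct (IHHs C' HC) as [Q HQ]. exists (App A' Q); ctx.
  - destruct H. destruct (inv_app_s _ _ _ _ Hi) as [A' [C' [-> D]]].
    unfold Dapp in D; destruct D as [[Hc _]|[[_ [HA HC]]|[[_ [Hnv [HA HC]]]|[Hc _]]]]; try congruence.
    all: try (simpl in *; tauto).
    destruct (inv_lam_s _ _ _ HA) as [B' [-> _]]. eexists; do 2 constructor.
      eapply ipar_value_f; eauto.
  - destruct (inv_app_s _ _ _ _ Hi) as [A' [C' [-> D]]].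
    unfold Dapp in D; destruct D as [[Hc _]|[[_ [HA HC]]|[[_ [Hnv [HA HC]]]|[Hc _]]]]; try congruence.
    + destruct (IHHs A' HA) as [Q HQ]. exists (App Q C'); ctx.
    + destruct (IHHs A' HA) as [Q HQ]. exists (App Q C'); ctx.
  - destruct (inv_app_s _ _ _ _ Hi) as [A' [C' [-> D]]].
    unfold Dapp in D; destruct D as [[Hc _]|[[_ [HA HC]]|[[_ [Hnv [HA HC]]]|[Hc _]]]]; try congruence.
    all: try (simpl in *; tauto).
    destruct (IHHs C' HC) as [Q HQ]. exists (App A' Q); ctx. eapply ipar_value_f; eauto.
  - destruct H. destruct (inv_app_s _ _ _ _ Hi) as [A' [C' [-> D]]].
    unfold Dapp in D; destruct D as [[Hc _]|[[_ [HA HC]]|[[Hc _]|[_ [Hnv [HC HA]]]]]]; try congruence.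
    all: try (simpl in *; tauto).
    destruct (inv_lam_s _ _ _ HA) as [B' [-> _]]. eexists; do 2 constructor.
      eapply ipar_value_f; eauto.
  - destruct (inv_app_s _ _ _ _ Hi) as [A' [C' [-> D]]].
    unfold Dapp in D; destruct D as [[Hc _]|[[_ [HA HC]]|[[Hc _]|[_ [Hnv [HC HA]]]]]]; try congruence.
    + destruct (IHHs C' HC) as [Q HQ]. exists (App A' Q); ctx.
    + destruct (IHHs C' HC) as [Q HQ]. exists (App A' Q); ctx.
  - destruct (inv_app_s _ _ _ _ Hi) as [A' [C' [-> D]]].
    unfold Dapp in D; destruct D as [[Hc _]|[[_ [HA HC]]|[[Hc _]|[_ [Hnv [HC HA]]]]]]; try congruence.
    all: try (simpl in *; tauto).
    destruct (IHHs A' HA) as [Q HQ]. exists (App Q C'); ctx. eapply ipar_value_f; eauto.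
Qed.

Lemma swap_star : forall c (M1 Z : T), clos_refl_trans_1n _ (surf c) M1 Z ->
  forall Y, ipar c Y M1 -> exists Z2, rt (surf c) Y Z2 /\ ipar c Z2 Z.
Proof.
  intros c M1 Z H; induction H; intros Y Hi.
  - exists Y; split; auto using rt_refl.
  - destruct (ipar_swap c Y x y Hi H) as [Q [HQ1 HQ2]].
    destruct (par_fact c Q y HQ2) as [Q0 [HQ3 HQ4]].
    destruct (IHclos_refl_trans_1n Q0 HQ4) as [R [HR1 HR2]].
    exists R; split; auto.
    eapply rt_trans; [apply rt_step; eauto | eapply rt_trans; eauto].
Qed.

Lemma factorize : forall c (M N : T), clos_refl_trans_1n _ (fr c) M N ->
  exists Z, rt (surf c) M Z /\ clos_refl_trans_1n _ (ipar c) Z N.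
Proof.
  intros c M N H; induction H.
  - exists x; split; [apply rt_refl | apply rt1n_refl].
  - destruct IHclos_refl_trans_1n as [Z1 [H1 H2]].
    destruct (par_fact c x y (full_par c x y H)) as [Y [H3 H4]].
    apply clos_rt_rt1n in H1.
    destruct (swap_star c y Z1 H1 Y H4) as [Z2 [H5 H6]].
    exists Z2; split. eapply rt_trans; eauto. econstructor; eauto.
Qed.

Lemma surf_normal_from : forall c (Z N : T), clos_refl_trans_1n _ (ipar c) Z N ->
  normal (surf c) N -> normal (surf c) Z.
Proof.
  intros c Z N H; induction H; intros Hn; auto.
  intros X HX. destruct (persist c x y X H HX) as [Y HY]. exact (IHclos_refl_trans_1n Hn Y HY).
Qed.

Lemma factorize_nf : forall c (M N : T), rt (fr c) M N -> normal (surf c) N ->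
  exists Z, rt (surf c) M Z /\ normal (surf c) Z /\ rt (fr c) Z N.
Proof.
  intros c M N H Hn. apply clos_rt_rt1n in H.
  destruct (factorize c M N H) as [Z [H1 H2]].
  exists Z; split; auto. split. eapply surf_normal_from; eauto.
  clear H1 Hn H. induction H2. apply rt_refl.
  eapply rt_trans; eauto. apply par_full, ipar_par; auto.
Qed.

Lemma head_lam_inv : forall (B X : T), head beta_rule (Lam B) X ->
  exists B', X = Lam B' /\ head beta_rule B B'.
Proof. intros; inversion H; subst; eauto. inversion H0. Qed.

Lemma head_app_inv : forall (A C X : T), head beta_rule (App A C) X ->
  (exists B, A = Lam B /\ X = subst0 C B) \/ (exists A', X = App A' C /\ head beta_rule A A').
Proof. intros; inversion H; subst; eauto. inversion H0; subst; eauto. Qed.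

Lemma weak_app_inv : forall (A C X : T), weak betav_rule (App A C) X ->
  (exists B, A = Lam B /\ is_value C /\ X = subst0 C B) \/
  (exists A', X = App A' C /\ weak betav_rule A A') \/
  (exists C', X = App A C' /\ weak betav_rule C C').
Proof. intros; inversion H; subst; eauto. inversion H0; subst; eauto. Qed.

Lemma left_app_inv : forall (A C X : T), left betav_rule (App A C) X ->
  (exists B, A = Lam B /\ is_value C /\ X = subst0 C B) \/
  (exists A', X = App A' C /\ left betav_rule A A') \/
  (is_value A /\ exists C', X = App A C' /\ left betav_rule C C').
Proof. intros; inversion H; subst; eauto 7. inversion H0; subst; eauto. Qed.

Lemma right_app_inv : forall (A C X : T), right betav_rule (App A C) X ->
  (exists B, A = Lam B /\ is_value C /\ X = subst0 C B) \/
  (exists C', X = App A C' /\ right betav_rule C C') \/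
  (is_value C /\ exists A', X = App A' C /\ right betav_rule A A').
Proof. intros; inversion H; subst; eauto 7. inversion H0; subst; eauto. Qed.

Lemma weak_value : forall (V X : T), is_value V -> weak betav_rule V X -> False.
Proof. intros; apply (surf_value CbV_weak V X); auto; discriminate. Qed.
Lemma left_value : forall (V X : T), is_value V -> left betav_rule V X -> False.
Proof. intros; apply (surf_value CbV_left V X); auto; discriminate. Qed.
Lemma right_value : forall (V X : T), is_value V -> right betav_rule V X -> False.
Proof. intros; apply (surf_value CbV_right V X); auto; discriminate. Qed.

Definition diamond (R : T -> T -> Prop) := forall M M1 M2, R M M1 -> R M M2 ->
  M1 = M2 \/ exists P, R M1 P /\ R M2 P.

Lemma surf_diamond : forall c, diamond (surf c).
Proof.
  intros c M; induction M; intros X1 X2 H1 H2;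
    try solve [exfalso; eapply surf_var; eauto | exfalso; eapply surf_opr; eauto].
  - destruct c; try solve [exfalso; eapply surf_value; [| | exact H1]; simpl; auto; discriminate].
    simpl in *. destruct (head_lam_inv _ _ H1) as [B1 [-> HB1]].
    destruct (head_lam_inv _ _ H2) as [B2 [-> HB2]].
    destruct (IHM B1 B2 HB1 HB2) as [->|[P [HP1 HP2]]]; auto.
    right; exists (Lam P); split; apply head_lam; auto.
  - destruct c; simpl in *.
    + destruct (head_app_inv _ _ _ H1) as [[B [-> ->]]|[A1 [-> HA1]]];
      destruct (head_app_inv _ _ _ H2) as [[B' [E ->]]|[A2 [-> HA2]]].
      * inversion E; subst; auto.
      * destruct (head_lam_inv _ _ HA2) as [B2 [-> HB2]].
        right; exists (subst0 M2 B2); split.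
        -- apply (surf_subst CbN); auto.
        -- do 2 constructor.
      * subst. destruct (head_lam_inv _ _ HA1) as [B1 [-> HB1]].
        right; exists (subst0 M2 B1); split.
        -- do 2 constructor.
        -- apply (surf_subst CbN); auto.
      * destruct (IHM1 A1 A2 HA1 HA2) as [->|[P [HP1 HP2]]]; auto.
        right; exists (App P M2); split; apply head_appl; auto.
    + destruct (weak_app_inv _ _ _ H1) as [[B [-> [Hv ->]]]|[[A1 [-> HA1]]|[C1 [-> HC1]]]];
      destruct (weak_app_inv _ _ _ H2) as [[B' [E [Hv' ->]]]|[[A2 [-> HA2]]|[C2 [-> HC2]]]];
      try solve [subst; match goal with H : weak betav_rule ?V ?W |- _ => exfalso; apply (weak_value V W); [simpl; first [exact I | assumption] | exact H] end].
      * inversion E; subst; auto.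
      * destruct (IHM1 A1 A2 HA1 HA2) as [->|[P [HP1 HP2]]]; auto.
        right; exists (App P M2); split; apply weak_appl; auto.
      * right; exists (App A1 C2); split; [apply weak_appr | apply weak_appl]; auto.
      * right; exists (App A2 C1); split; [apply weak_appl | apply weak_appr]; auto.
      * destruct (IHM2 C1 C2 HC1 HC2) as [->|[P [HP1 HP2]]]; auto.
        right; exists (App M1 P); split; apply weak_appr; auto.
    + destruct (left_app_inv _ _ _ H1) as [[B [-> [Hv ->]]]|[[A1 [-> HA1]]|[Hv [C1 [-> HC1]]]]];
      destruct (left_app_inv _ _ _ H2) as [[B' [E [Hv' ->]]]|[[A2 [-> HA2]]|[Hv' [C2 [-> HC2]]]]];
      try solve [subst; match goal with H : left betav_rule ?V ?W |- _ => exfalso; apply (left_value V W); [simpl; first [exact I | assumption] | exact H] end].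
      * inversion E; subst; auto.
      * destruct (IHM1 A1 A2 HA1 HA2) as [->|[P [HP1 HP2]]]; auto.
        right; exists (App P M2); split; apply left_appl; auto.
      * destruct (IHM2 C1 C2 HC1 HC2) as [->|[P [HP1 HP2]]]; auto.
        right; exists (App M1 P); split; apply left_appr; auto.
    + destruct (right_app_inv _ _ _ H1) as [[B [-> [Hv ->]]]|[[C1 [-> HC1]]|[Hv [A1 [-> HA1]]]]];
      destruct (right_app_inv _ _ _ H2) as [[B' [E [Hv' ->]]]|[[C2 [-> HC2]]|[Hv' [A2 [-> HA2]]]]];
      try solve [subst; match goal with H : right betav_rule ?V ?W |- _ => exfalso; apply (right_value V W); [simpl; first [exact I | assumption] | exact H] end].
      * inversion E; subst; auto.
      * destruct (IHM2 C1 C2 HC1 HC2) as [->|[P [HP1 HP2]]]; auto.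
        right; exists (App M1 P); split; apply right_appr; auto.
      * destruct (IHM1 A1 A2 HA1 HA2) as [->|[P [HP1 HP2]]]; auto.
        right; exists (App P M2); split; apply right_appl; auto.
Qed.

Lemma normal_kind : forall c (M M' : T), normal (surf c) M -> fr c M M' -> kind M = kind M'.
Proof.
  intros c M M' Hn Hf; destruct Hf; try reflexivity.
  exfalso; apply (Hn M'); apply rule_surf; auto.
Qed.

Lemma lam_of_kind : forall (P B : T), kind P = kind (Lam B) -> exists B0, P = Lam B0.
Proof. destruct P; simpl; intros; try discriminate; eauto. Qed.

Lemma normal_pres : forall c (M M' : T), fr c M M' -> normal (surf c) M -> normal (surf c) M'.
Proof.
  intros c M M' Hf; induction Hf; intros Hn X HX.
  - apply (Hn M'); apply rule_surf; auto.
  - destruct c; simpl in *.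
    + destruct (head_lam_inv _ _ HX) as [B' [-> HB]].
      refine (IHHf _ B' HB). intros Y HY; apply (Hn (Lam Y)); apply head_lam; auto.
    + apply (weak_value (Lam M') X I HX).
    + apply (left_value (Lam M') X I HX).
    + apply (right_value (Lam M') X I HX).
  - assert (HK : normal (surf c) M -> kind M = kind M') by (intros; eapply normal_kind; eauto).
    destruct c; simpl in *.
    + assert (HnM : normal (head beta_rule) M) by (intros Y HY; apply (Hn (App Y N)); apply head_appl; auto).
      destruct (head_app_inv _ _ _ HX) as [[B [-> ->]]|[A' [-> HA]]].
      * destruct (lam_of_kind M B (HK HnM)) as [B0 ->]. apply (Hn (subst0 N B0)); do 2 constructor.
      * apply (IHHf HnM A' HA).
    + assert (HnM : normal (weak betav_rule) M) by (intros Y HY; apply (Hn (App Y N)); apply weak_appl; auto).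
      destruct (weak_app_inv _ _ _ HX) as [[B [-> [Hv ->]]]|[[A' [-> HA]]|[C' [-> HC]]]].
      * destruct (lam_of_kind M B (HK HnM)) as [B0 ->]. apply (Hn (subst0 N B0)); do 2 constructor; auto.
      * apply (IHHf HnM A' HA).
      * apply (Hn (App M C')); apply weak_appr; auto.
    + assert (HnM : normal (left betav_rule) M) by (intros Y HY; apply (Hn (App Y N)); apply left_appl; auto).
      destruct (left_app_inv _ _ _ HX) as [[B [-> [Hv ->]]]|[[A' [-> HA]]|[Hv [C' [-> HC]]]]].
      * destruct (lam_of_kind M B (HK HnM)) as [B0 ->]. apply (Hn (subst0 N B0)); do 2 constructor; auto.
      * apply (IHHf HnM A' HA).
      * apply (Hn (App M C')); apply left_appr; auto.
        apply (kind_value M' M); auto. symmetry; auto.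
    + destruct (right_app_inv _ _ _ HX) as [[B [-> [Hv ->]]]|[[C' [-> HC]]|[Hv [A' [-> HA]]]]].
      * assert (HnM : normal (right betav_rule) M) by (intros Y HY; apply (Hn (App Y N)); apply right_appl; auto).
        destruct (lam_of_kind M B (HK HnM)) as [B0 ->]. apply (Hn (subst0 N B0)); do 2 constructor; auto.
      * apply (Hn (App M C')); apply right_appr; auto.
      * assert (HnM : normal (right betav_rule) M) by (intros Y HY; apply (Hn (App Y N)); apply right_appl; auto).
        apply (IHHf HnM A' HA).
  - assert (HK : normal (surf c) N -> kind N = kind N') by (intros; eapply normal_kind; eauto).
    destruct c; simpl in *.
    + destruct (head_app_inv _ _ _ HX) as [[B [-> ->]]|[A' [-> HA]]].
      * apply (Hn (subst0 N B)); do 2 constructor.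
      * apply (Hn (App A' N)); apply head_appl; auto.
    + assert (HnN : normal (weak betav_rule) N) by (intros Y HY; apply (Hn (App M Y)); apply weak_appr; auto).
      destruct (weak_app_inv _ _ _ HX) as [[B [-> [Hv ->]]]|[[A' [-> HA]]|[C' [-> HC]]]].
      * apply (Hn (subst0 N B)); do 2 constructor. apply (kind_value N' N); auto. symmetry; auto.
      * apply (Hn (App A' N)); apply weak_appl; auto.
      * apply (IHHf HnN C' HC).
    + destruct (left_app_inv _ _ _ HX) as [[B [-> [Hv ->]]]|[[A' [-> HA]]|[Hv [C' [-> HC]]]]].
      * assert (HnN : normal (left betav_rule) N) by (intros Y HY; apply (Hn (App (Lam B) Y)); apply left_appr; simpl; auto).
        apply (Hn (subst0 N B)); do 2 constructor. apply (kind_value N' N); auto. symmetry; auto.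
      * apply (Hn (App A' N)); apply left_appl; auto.
      * assert (HnN : normal (left betav_rule) N) by (intros Y HY; apply (Hn (App M Y)); apply left_appr; auto).
        apply (IHHf HnN C' HC).
    + assert (HnN : normal (right betav_rule) N) by (intros Y HY; apply (Hn (App M Y)); apply right_appr; auto).
      destruct (right_app_inv _ _ _ HX) as [[B [-> [Hv ->]]]|[[C' [-> HC]]|[Hv [A' [-> HA]]]]].
      * apply (Hn (subst0 N B)); do 2 constructor. apply (kind_value N' N); auto. symmetry; auto.
      * apply (IHHf HnN C' HC).
      * apply (Hn (App A' N)); apply right_appl; auto. apply (kind_value N' N); auto. symmetry; auto.
  - apply (surf_opr c o (l1 ++ M' :: l2) X HX).
Qed.

Lemma unb_full : forall c (M M' : T), unb c M M' -> fr c M M'.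
Proof.
  induction 1. apply surf_full; auto. apply full_lam; auto. apply full_appl; auto.
  apply full_appr; auto. apply full_opr; auto.
Qed.

Lemma list_split_eq : forall (l1 l2 k1 k2 : list T) a b, l1 ++ a :: l2 = k1 ++ b :: k2 ->
  (l1 = k1 /\ a = b /\ l2 = k2) \/
  (exists m, k1 = l1 ++ a :: m /\ l2 = m ++ b :: k2) \/
  (exists m, l1 = k1 ++ b :: m /\ k2 = m ++ a :: l2).
Proof.
  induction l1; intros l2 k1 k2 a0 b H; destruct k1; simpl in *; inversion H; subst.
  - auto.
  - right; left; exists k1; auto.
  - right; right; exists l1; auto.
  - destruct (IHl1 _ _ _ _ _ H2) as [[-> [-> ->]]|[[m [-> ->]]|[m [-> ->]]]]; auto.
    + right; left; exists m; auto.
    + right; right; exists m; auto.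
Qed.

Lemma unb_opr' : forall c o k1 k2 (X X' : T), unb c X X' ->
  unb c (Opr o (k1 ++ X :: k2)) (Opr o (k1 ++ X' :: k2)).
Proof. intros; apply unb_opr; auto. intros Y HY; eapply surf_opr; eauto. Qed.

Lemma unb_diamond : forall c, diamond (unb c).
Proof.
  unfold diamond; intros c M M1 M2 H1; revert M2; induction H1; intros M2 H2;
    inversion H2 as [a b Hs| a b Hn' Hu | a b d Hn' Hu | a b d Hn' Hu | o' k1 k2 a b Hn' Hu]; subst;
    try solve [match goal with Hn : normal _ ?X, Hs : surf _ ?X _ |- _ => exfalso; exact (Hn _ Hs) end].
  - destruct (surf_diamond c M M' M2 H Hs) as [->|[P [HP1 HP2]]]; auto.
    right; exists P; split; apply unb_surf; auto.
  - destruct (IHunb _ Hu) as [->|[Q [HQ1 HQ2]]]; auto.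
    right; exists (Lam Q); split; apply unb_lam; auto.
    + eapply normal_pres; eauto. apply full_lam, unb_full; auto.
    + eapply normal_pres; eauto. apply full_lam, unb_full; auto.
  - destruct (IHunb _ Hu) as [->|[R [HR1 HR2]]]; auto.
    right; exists (App R Q); split; apply unb_appl; auto.
    + eapply normal_pres; eauto. apply full_appl, unb_full; auto.
    + eapply normal_pres; eauto. apply full_appl, unb_full; auto.
  - right; exists (App P' d); split.
    + apply unb_appr; auto. eapply normal_pres; eauto. apply full_appl, unb_full; auto.
    + apply unb_appl; auto. eapply normal_pres; eauto. apply full_appr, unb_full; auto.
  - right; exists (App b Q'); split.
    + apply unb_appl; auto. eapply normal_pres; eauto. apply full_appr, unb_full; auto.
    + apply unb_appr; auto. eapply normal_pres; eauto. apply full_appl, unb_full; auto.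
  - destruct (IHunb _ Hu) as [->|[R [HR1 HR2]]]; auto.
    right; exists (App P R); split; apply unb_appr; auto.
    + eapply normal_pres; eauto. apply full_appr, unb_full; auto.
    + eapply normal_pres; eauto. apply full_appr, unb_full; auto.
  - match goal with E : _ ++ _ :: _ = _ ++ _ :: _ |- _ => destruct (list_split_eq _ _ _ _ _ _ E) as [[-> [-> ->]]|[[m [-> ->]]|[m [-> ->]]]] end.
    + destruct (IHunb _ Hu) as [->|[R [HR1 HR2]]]; auto.
      right; exists (Opr o (l1 ++ R :: l2)); split; apply unb_opr'; auto.
    + right; exists (Opr o (k1 ++ b :: m ++ P' :: l2)); split.
      * replace ((k1 ++ a :: m) ++ P' :: l2) with (k1 ++ a :: m ++ P' :: l2)
          by (rewrite <- app_assoc; reflexivity).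
        apply unb_opr'; auto.
      * replace (k1 ++ b :: m ++ P' :: l2) with ((k1 ++ b :: m) ++ P' :: l2)
          by (rewrite <- app_assoc; reflexivity).
        replace (k1 ++ b :: m ++ P :: l2) with ((k1 ++ b :: m) ++ P :: l2)
          by (rewrite <- app_assoc; reflexivity).
        apply unb_opr'; auto.
    + right; exists (Opr o (l1 ++ P' :: m ++ b :: k2)); split.
      * replace (l1 ++ P' :: m ++ b :: k2) with ((l1 ++ P' :: m) ++ b :: k2)
          by (rewrite <- app_assoc; reflexivity).
        replace (l1 ++ P' :: m ++ a :: k2) with ((l1 ++ P' :: m) ++ a :: k2)
          by (rewrite <- app_assoc; reflexivity).
        apply unb_opr'; auto.
      * replace ((l1 ++ P :: m) ++ b :: k2) with (l1 ++ P :: m ++ b :: k2)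
          by (rewrite <- app_assoc; reflexivity).
        apply unb_opr'; auto.
Qed.

Lemma not_normal : forall (R : T -> T -> Prop) M, ~ normal R M -> exists N, R M N.
Proof.
  intros R M H. apply NNPP; intro Hc; apply H; intros N HN; apply Hc; eauto.
Qed.

Lemma full_unb : forall c (M N : T), fr c M N -> exists N', unb c M N'.
Proof.
  induction 1.
  - exists M'; apply unb_surf, rule_surf; auto.
  - destruct IHfull as [P HP]. destruct (classic (normal (surf c) (Lam M))) as [Hn|Hn].
    + exists (Lam P); apply unb_lam; auto.
    + destruct (not_normal _ _ Hn) as [X HX]; exists X; apply unb_surf; auto.
  - destruct IHfull as [P HP]. destruct (classic (normal (surf c) (App M N))) as [Hn|Hn].
    + exists (App P N); apply unb_appl; auto.
    + destruct (not_normal _ _ Hn) as [X HX]; exists X; apply unb_surf; auto.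
  - destruct IHfull as [P HP]. destruct (classic (normal (surf c) (App M N))) as [Hn|Hn].
    + exists (App M P); apply unb_appr; auto.
    + destruct (not_normal _ _ Hn) as [X HX]; exists X; apply unb_surf; auto.
  - destruct IHfull as [P HP]. exists (Opr o (l1 ++ P :: l2)); apply unb_opr'; auto.
Qed.

Lemma normal_equiv : forall c (M : T), normal (unb c) M <-> normal (fr c) M.
Proof.
  intros c M; split; intros H N HN.
  - destruct (full_unb c M N HN) as [N' HN']. exact (H N' HN').
  - exact (H N (unb_full c M N HN)).
Qed.

Lemma normal_pres_rt : forall c (Z Y : T), rt (fr c) Z Y -> normal (surf c) Z ->
  normal (surf c) Y /\ kind Z = kind Y.
Proof.
  induction 1; intros Hn.
  - split; [eapply normal_pres; eauto | eapply normal_kind; eauto].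
  - auto.
  - destruct (IHclos_refl_trans1 Hn) as [H1 K1]. destruct (IHclos_refl_trans2 H1) as [H2 K2].
    split; [auto | congruence].
Qed.

Lemma rt_lam_dec : forall c (X Y : T), clos_refl_trans_1n _ (fr c) X Y ->
  forall P, X = Lam P -> exists P', Y = Lam P' /\ rt (fr c) P P'.
Proof.
  induction 1; intros P ->.
  - exists P; split; auto using rt_refl.
  - inversion H; subst.
    + destruct (rule_app c _ _ H1) as [? [? E]]; discriminate.
    + destruct (IHclos_refl_trans_1n M' eq_refl) as [P' [-> HP]].
      exists P'; split; auto. eapply rt_trans; [apply rt_step|]; eauto.
Qed.

Lemma rt_app_dec : forall c (X Y : T), clos_refl_trans_1n _ (fr c) X Y -> normal (surf c) X ->
  forall P Q, X = App P Q -> exists P' Q', Y = App P' Q' /\ rt (fr c) P P' /\ rt (fr c) Q Q'.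
Proof.
  induction 1; intros Hn P Q ->.
  - exists P, Q; split; auto using rt_refl.
  - assert (Hy : normal (surf c) y) by (eapply normal_pres; eauto).
    inversion H; subst.
    + exfalso; apply (Hn y); apply rule_surf; auto.
    + destruct (IHclos_refl_trans_1n Hy M' Q eq_refl) as [P' [Q' [-> [H1 H2]]]].
      exists P', Q'; split; auto. split; auto. eapply rt_trans; [apply rt_step|]; eauto.
    + destruct (IHclos_refl_trans_1n Hy P N' eq_refl) as [P' [Q' [-> [H1 H2]]]].
      exists P', Q'; split; auto. split; auto. eapply rt_trans; [apply rt_step|]; eauto.
Qed.

Lemma forall2_step : forall (R : T -> T -> Prop) l1 l2 l' M M',
  Forall2 (rt R) (l1 ++ M' :: l2) l' -> R M M' -> Forall2 (rt R) (l1 ++ M :: l2) l'.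
Proof.
  induction l1; simpl; intros l2 l' M M' H HR; inversion H; subst; constructor; eauto.
  eapply rt_trans; [apply rt_step|]; eauto.
Qed.

Lemma rt_opr_dec : forall c (X Y : T), clos_refl_trans_1n _ (fr c) X Y ->
  forall o l, X = Opr o l -> exists l', Y = Opr o l' /\ Forall2 (rt (fr c)) l l'.
Proof.
  induction 1; intros o l ->.
  - exists l; split; auto. induction l; constructor; auto using rt_refl.
  - inversion H; subst.
    + destruct (rule_app c _ _ H1) as [? [? E]]; discriminate.
    + destruct (IHclos_refl_trans_1n o (l1 ++ M' :: l2) eq_refl) as [l' [-> HF]].
      exists l'; split; auto. eapply forall2_step; eauto.
Qed.

Lemma rt_unb_lam : forall c (P P' : T), clos_refl_trans_1n _ (unb c) P P' ->
  normal (surf c) (Lam P) -> rt (unb c) (Lam P) (Lam P').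
Proof.
  induction 1; intros Hn. apply rt_refl.
  eapply rt_trans; [apply rt_step; apply unb_lam; eauto|].
  apply IHclos_refl_trans_1n. eapply normal_pres; eauto. apply full_lam, unb_full; auto.
Qed.

Lemma rt_unb_appl : forall c (P P' Q : T), clos_refl_trans_1n _ (unb c) P P' ->
  normal (surf c) (App P Q) -> rt (unb c) (App P Q) (App P' Q).
Proof.
  induction 1; intros Hn. apply rt_refl.
  eapply rt_trans; [apply rt_step; apply unb_appl; eauto|].
  apply IHclos_refl_trans_1n. eapply normal_pres; eauto. apply full_appl, unb_full; auto.
Qed.

Lemma rt_unb_appr : forall c (P Q Q' : T), clos_refl_trans_1n _ (unb c) Q Q' ->
  normal (surf c) (App P Q) -> rt (unb c) (App P Q) (App P Q').
Proof.
  induction 1; intros Hn. apply rt_refl.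
  eapply rt_trans; [apply rt_step; apply unb_appr; eauto|].
  apply IHclos_refl_trans_1n. eapply normal_pres; eauto. apply full_appr, unb_full; auto.
Qed.

Lemma rt_unb_full : forall c (X Y : T), rt (unb c) X Y -> rt (fr c) X Y.
Proof. intros. apply (rt_map (unb c) (fr c) (fun x => x)); auto. apply unb_full. Qed.

Lemma normal_surf_of_full : forall c (N : T), normal (fr c) N -> normal (surf c) N.
Proof. intros c N H X HX; apply (H X); apply surf_full; auto. Qed.

Lemma opr_components : forall c o (k l : list T), Forall2 (rt (fr c)) k l ->
  Forall (fun N => normal (fr c) N -> forall M, rt (fr c) M N -> rt (unb c) M N) l ->
  forall pre, normal (fr c) (Opr o (pre ++ l)) -> Forall2 (rt (unb c)) k l.
Proof.
  induction 1; intros HF pre Hn; constructor; inversion HF; subst.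
  - apply H3; auto. intros Y HY. apply (Hn (Opr o (pre ++ Y :: l'))). apply full_opr; auto.
  - apply (IHForall2 H4 (pre ++ [y])). rewrite <- app_assoc; auto.
Qed.

Lemma part3 : forall c (N : T), normal (fr c) N -> forall M, rt (fr c) M N -> rt (unb c) M N.
Proof.
  intros c N; induction N using tm_ind2; intros HN M HM;
  destruct (factorize_nf c M _ HM (normal_surf_of_full c _ HN)) as [Z [HZ1 [HZ2 HZ3]]];
  apply rt_trans with Z;
  try (apply (rt_map (surf c) (unb c) (fun x => x)); auto; apply unb_surf);
  destruct (normal_pres_rt c Z _ HZ3 HZ2) as [_ HK];
  destruct Z; simpl in HK; try discriminate; apply clos_rt_rt1n in HZ3.
  - inversion HZ3; subst. apply rt_refl.
    inversion H; subst. destruct (rule_app c _ _ H1) as [? [? E]]; discriminate.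
  - destruct (rt_lam_dec c _ _ HZ3 Z eq_refl) as [P' [E HP]]. inversion E; subst.
    apply rt_unb_lam; auto. apply clos_rt_rt1n, IHN; auto.
    intros Y HY; apply (HN (Lam Y)); apply full_lam; auto.
  - destruct (rt_app_dec c _ _ HZ3 HZ2 Z1 Z2 eq_refl) as [P' [Q' [E [HP HQ]]]].
    injection E as <- <-.
    assert (H1 : rt (unb c) Z1 N1) by (apply IHN1; auto; intros Y HY; apply (HN (App Y N2)); apply full_appl; auto).
    assert (H2 : rt (unb c) Z2 N2) by (apply IHN2; auto; intros Y HY; apply (HN (App N1 Y)); apply full_appr; auto).
    apply clos_rt_rt1n in H1. apply clos_rt_rt1n in H2.
    eapply rt_trans; [apply rt_unb_appl; eauto|].
    apply rt_unb_appr; auto.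
    destruct (normal_pres_rt c (App Z1 Z2) (App N1 Z2)) as [Hn _]; auto.
    apply rt_unb_full. apply rt_unb_appl; auto.
  - destruct (rt_opr_dec c _ _ HZ3 o0 l0 eq_refl) as [l' [E HF]].
    injection E as <- <-.
    apply rt_opr. intros; apply unb_opr'; auto.
    apply (opr_components c o l0 l HF H nil); auto.
Qed.
End Proofs.

Theorem mainTheorem4 (Op : Type) (arity : Op -> nat) (c : calculus) :
  (* 1. RD-diamond *)
  (forall M M1 M2 : tm Op, wf arity M ->
     unb c M M1 -> unb c M M2 ->
     M1 = M2 \/ exists P, unb c M1 P /\ unb c M2 P)
  /\
  (* 2. same normal forms as ->_{beta_bullet} *)
  (forall M : tm Op, wf arity M ->
     (normal (unb c) M <-> normal (step c) M))
  /\
  (* 3. normalizing reductions are captured *)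
  (forall M N : tm Op, wf arity M ->
     normal (step c) N ->
     clos_refl_trans _ (step c) M N ->
     clos_refl_trans _ (unb c) M N).
Proof.
  split; [|split].
  - intros M M1 M2 _ H1 H2. exact (unb_diamond Op c M M1 M2 H1 H2).
  - intros M _. exact (normal_equiv Op c M).
  - intros M N _ HN HM. exact (part3 Op c N HN M HM).
Qed.
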